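(* For every pointed digraph $(G,g)$ and every $n\ge 0$ there is a natural bijection $A_n(G,g)\cong\pi_n(N_\infty G,g)$, where $g$ is regarded as a $0$-cube of the Kan complex $N_\infty G$ and $\pi_n$ is its $n$-th homotopy group (equivalently that of its geometric realization).
   Context: Digraphs: vertex set $V(G)$ with arrows $E(G)\subseteq V(G)^2$ containing the diagonal; digraph maps preserve arrows. Box product $G\otimes H$: arrow $(g,h)\to(g',h')$ iff ($g\to g'$, $h=h'$) or ($g=g'$, $h\to h'$). Interval: digraph on $\{0,\dots,k\}$ with, for each $i<k$, exactly one of $i\to i+1$, $i+1\to i$ as non-degenerate arrows; $\partial J=\{0,k\}$. Shrinking: digraph map of intervals surjective and monotone on vertices; $\mathsf{Shr}$ the category of intervals and shrinkings. Pairs $(G,H)$ with $H$ induced; $(G,H)\otimes(G',H')=(G\otimes G',G\otimes H'\cup H\otimes G')$; maps of pairs $\varphi,\psi$ are homotopic rel $H$ if connected by a chain $\varphi_0,\dots,\varphi_r$ of pair maps agreeing on $H$ with, at each step, either $\varphi_t(x)\to\varphi_{t+1}(x)$ for all $x$ or $\varphi_{t+1}(x)\to\varphi_t(x)$ for all $x$; $[-,-]$ the set of classes. $A_n(G,g)=\mathrm{colim}_{(J_1,\dots,J_n)\in(\mathsf{Shr}^{\mathrm{op}})^n}[\bigotimes_i(J_i,\partial J_i),(G,\{g\})]$. $I_n$: vertices $\{0,\dots,n\}$, non-degenerate arrows $2i\to 2i+1$, $2j+2\to2j+1$; $I_n^{\mathrm{op}}$ reversed. For an interval $J$ with vertices $\{0,\dots,k\}$,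 $N_JG$ is the cubical set with connections with $n$-cubes $\mathrm{Hom}(J^{\otimes n},G)$ (faces insert $0$ or $k$, degeneracies delete coordinates, connections max/min). $r:I^\varepsilon_{n+1}\to I^\varepsilon_n$, $r(x)=\min(x,n)$; $l:I^{-\varepsilon}_{n+1}\to I^\varepsilon_n$, $l(x)=\max(x-1,0)$ (with $I^{+1}=I$, $I^{-1}=I^{\mathrm{op}}$). $N_\infty G=\mathrm{colim}(N_{I_1}G\xrightarrow{r^*}N_{I_2}G\xrightarrow{l^*}N_{I_3^{\mathrm{op}}}G\xrightarrow{r^*}N_{I_4^{\mathrm{op}}}G\xrightarrow{l^*}\cdots)$; it is a Kan complex. *)

(* Defs.v *)
From mathcomp Require Import all_boot.
From Stdlib Require Import Relations.Relation_Operators.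

Set Implicit Arguments.
Unset Strict Implicit.
Unset Printing Implicit Defensive.

Record digraph := Digraph {
  vert :> Type;
  arr : vert -> vert -> Prop;
  arr_refl : forall x, arr x x }.

Definition dmap (G H : digraph) (f : G -> H) : Prop :=
  forall x y, arr x y -> arr (f x) (f y).

(* Intervals.  An interval J with vertices {0,..,k}, k = size J, is    *)
(* encoded by the sequence of its edge directions: for i < k the       *)
(* non-degenerate arrow is i -> i+1 if nth false J i, else i+1 -> i.   *)
Definition interval := seq bool.

Definition iarr (J : interval) (x y : nat) : Prop :=
  [/\ x <= size J, y <= size J &
      x = y \/ (y = x.+1 /\ nth false J x) \/ (x = y.+1 /\ ~~ nth false J y)].

(* Shrinkings J -> J' : digraph maps surjective and monotone on        *)
(* vertices (only the values on {0..size J} matter).                   *)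
Definition shrinking (J J' : interval) (f : nat -> nat) : Prop :=
  [/\ (forall x, x <= size J -> f x <= size J'),
      (forall x y, iarr J x y -> iarr J' (f x) (f y)),
      (forall y, y <= size J' -> exists2 x, x <= size J & f x = y) &
      (forall x y, x <= y -> y <= size J -> f x <= f y)].

(* Box product J_1 (x) ... (x) J_n; vertices are the x : 'I_n -> nat   *)
(* with x i <= size (Js i).                                            *)
Definition inbox n (Js : 'I_n -> interval) (x : 'I_n -> nat) : Prop :=
  forall i, x i <= size (Js i).

Definition boxarr n (Js : 'I_n -> interval) (x y : 'I_n -> nat) : Prop :=
  [/\ inbox Js x, inbox Js y &
      (forall j, x j = y j) \/
      exists i, iarr (Js i) (x i) (y i) /\ forall j, j != i -> x j = y j].

(* The subdigraph of the pair (x)_i (J_i, dJ_i): some coordinate is an *)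
(* endpoint.                                                           *)
Definition onbd n (Js : 'I_n -> interval) (x : 'I_n -> nat) : Prop :=
  exists i, x i = 0 \/ x i = size (Js i).

Definition pairmap n (Js : 'I_n -> interval) (G : digraph) (g : G)
    (phi : ('I_n -> nat) -> G) : Prop :=
  (forall x y, boxarr Js x y -> arr (phi x) (phi y)) /\
  (forall x, inbox Js x -> onbd Js x -> phi x = g).

Definition hstep n (Js : 'I_n -> interval) (G : digraph)
    (phi psi : ('I_n -> nat) -> G) : Prop :=
  (forall x, inbox Js x -> arr (phi x) (psi x)) \/
  (forall x, inbox Js x -> arr (psi x) (phi x)).

(* A_n(G,g): colimit over (Shr^op)^n of the sets of homotopy classes.  *)
Definition Arep n (G : digraph) := {Js : 'I_n -> interval & ('I_n -> nat) -> G}.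

Inductive Agen n (G : digraph) (g : G) : Arep n G -> Arep n G -> Prop :=
| Agen_htpy (Js : 'I_n -> interval) (phi psi : ('I_n -> nat) -> G) :
    pairmap Js g phi -> pairmap Js g psi -> hstep Js phi psi ->
    Agen g (existT _ Js phi) (existT _ Js psi)
| Agen_shr (Js Js' : 'I_n -> interval) (f : 'I_n -> nat -> nat)
    (phi : ('I_n -> nat) -> G) :
    (forall i, shrinking (Js' i) (Js i) (f i)) -> pairmap Js g phi ->
    Agen g (existT _ Js phi) (existT _ Js' (fun x => phi (fun i => f i (x i)))).

Definition Aeq n (G : digraph) (g : G) : Arep n G -> Arep n G -> Prop :=
  clos_refl_sym_trans _ (@Agen n G g).

Definition A n (G : digraph) (g : G) :=
  {P : Arep n G -> Prop |
     exists2 a : Arep n G, pairmap (tag a) g (tagged a) & P = Aeq g a}.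
Arguments A : clear implicits.

(* N_oo G.  Level m (m : nat) stands for the (m+1)-st interval in      *)
(* I_1, I_2, I_3^op, I_4^op, I_5, I_6, I_7^op, ...                     *)
(* I_k (eps = true): arrow 2i -> 2i+1 and 2j+2 -> 2j+1, i.e. the edge  *)
(* between i and i+1 points forward iff i is even; I_k^op reversed.    *)
Definition Iseq (k : nat) (eps : bool) : interval :=
  [seq (if eps then ~~ odd i else odd i) | i <- iota 0 k].

Definition Jinf (m : nat) : interval := Iseq m.+1 (m %% 4 < 2).

(* the map J_{m+2} -> J_{m+1} used in the colimit: r if m+1 is odd,  *)
(* l if m+1 is even.                                                   *)
Definition rho (m : nat) (x : nat) : nat :=
  if odd m.+1 then minn x m.+1 else x.-1.

Definition ncube n (G : digraph) (m : nat) (c : ('I_n -> nat) -> G) : Prop :=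
  forall x y, boxarr (fun _ => Jinf m) x y -> arr (c x) (c y).

Definition Nrep n (G : digraph) := {m : nat & ('I_n -> nat) -> G}.

(* generating relation of the sequential colimit of n-cubes *)
Inductive Ngen n (G : digraph) : Nrep n G -> Nrep n G -> Prop :=
| Ngen_box m (c c' : ('I_n -> nat) -> G) :
    ncube m c -> (forall x, inbox (fun _ => Jinf m) x -> c x = c' x) ->
    Ngen (existT _ m c) (existT _ m c')
| Ngen_step m (c : ('I_n -> nat) -> G) :
    ncube m c ->
    Ngen (existT _ m c) (existT _ m.+1 (fun x => c (fun i => rho m (x i)))).

Definition sphere n (G : digraph) (g : G) (m : nat) (c : ('I_n -> nat) -> G) :=
  ncube m c /\ (forall x, inbox (fun _ => Jinf m) x -> onbd (fun _ => Jinf m) x -> c x = g).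

Definition nhtpy n (G : digraph) (g : G) (m : nat) (c c' : ('I_n -> nat) -> G) :=
  exists h : ('I_n.+1 -> nat) -> G,
    [/\ ncube m h,
        (forall y, inbox (fun _ => Jinf m) y -> y ord_max = 0 ->
           h y = c (fun i => y (lift ord_max i))),
        (forall y, inbox (fun _ => Jinf m) y -> y ord_max = size (Jinf m) ->
           h y = c' (fun i => y (lift ord_max i))) &
        (forall y, inbox (fun _ => Jinf m) y ->
           (exists2 j : 'I_n.+1, j != ord_max & y j = 0 \/ y j = size (Jinf m)) ->
           h y = g)].

Definition Pgen n (G : digraph) (g : G) (a b : Nrep n G) : Prop :=
  [/\ sphere g (tag a) (tagged a), sphere g (tag b) (tagged b) &
      Ngen a b \/ (tag a = tag b /\ nhtpy g (tag a) (tagged a) (tagged b))].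

Definition Peq n (G : digraph) (g : G) : Nrep n G -> Nrep n G -> Prop :=
  clos_refl_sym_trans _ (@Pgen n G g).

Definition Pi n (G : digraph) (g : G) :=
  {P : Nrep n G -> Prop |
     exists2 c : Nrep n G, sphere g (tag c) (tagged c) & P = Peq g c}.
Arguments Pi : clear implicits.

Definition Amap n (G H : digraph) (h : G -> H) (a : Arep n G) : Arep n H :=
  existT _ (tag a) (h \o tagged a).
Definition Nmap n (G H : digraph) (h : G -> H) (c : Nrep n G) : Nrep n H :=
  existT _ (tag c) (h \o tagged c).

Definition natural_family n (Phi : forall (G : digraph) (g : G), A n G g -> Pi n G g) :=
  forall (G G' : digraph) (h : G -> G') (g : G), dmap h ->
  forall (P : A n G g) (P' : A n G' (h g)) (a : Arep n G),
    sval P = Aeq g a -> sval P' = Aeq (h g) (Amap h a) ->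
  forall (Q : Pi n G g) (Q' : Pi n G' (h g)) (c : Nrep n G),
    sval Q = Peq g c -> sval Q' = Peq (h g) (Nmap h c) ->
    Phi G g P = Q -> Phi G' (h g) P' = Q'.

(* Main.v *)
From Pilot Require Import Defs.
From mathcomp Require Import all_boot.
From mathcomp Require Import zify.
From Stdlib Require Import Relations.Relation_Operators.
From Stdlib Require Import IndefiniteDescription FunctionalExtensionality PropExtensionality ProofIrrelevance.
Import Pilot.Defs.
Arguments rst_trans {A R x y z} _ _.
Arguments rst_sym {A R x y} _.
Arguments rst_step {A R x y} _.
Arguments rst_refl {A R x}.

Set Implicit Arguments.
Unset Strict Implicit.
Unset Printing Implicit Defensive.

Lemma iarr_refl J x : x <= size J -> iarr J x x.
Proof. by move=> h; split=> //; left. Qed.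

Definition zstep (K J : interval) (f : nat -> nat) :=
  [/\ f 0 = 0, f (size K) = size J &
      forall x, x < size K -> f x.+1 = f x \/
        (f x.+1 = (f x).+1 /\ nth false J (f x) = nth false K x)].

Section Z.
Variables (K J : interval) (f : nat -> nat).
Hypothesis hz : zstep K J f.

Lemma zstep_mono d x : x + d <= size K -> f x <= f (x + d).
Proof.
case: hz => _ _ hs; elim: d => [|d IH] h; first by rewrite addn0.
have h1 : f x <= f (x + d) by apply: IH; lia.
rewrite addnS; case: (hs (x + d)); [by rewrite -addnS | move=> ->; lia | case=> -> _; lia].
Qed.

Lemma zstep_mono2 x y : x <= y -> y <= size K -> f x <= f y.
Proof. by move=> hxy hy; have := @zstep_mono (y - x) x; rewrite subnKC //; apply. Qed.

Lemma zstep_le x : x <= size K -> f x <= size J.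
Proof. by move=> hx; case: (hz) => _ e _; rewrite -e; apply: zstep_mono2. Qed.

Lemma zstep_iarr x y : iarr K x y -> iarr J (f x) (f y).
Proof.
case: (hz) => _ _ hs [hx hy [->|[[? hn]|[? hn]]]]; subst.
- exact: iarr_refl (zstep_le hy).
- split; [exact: (zstep_le hx) | exact: (zstep_le hy) |].
  case: (hs x hy) => [->|[-> e]]; [by left| by right; left; split => //; rewrite e].
- split; [exact: (zstep_le hx) | exact: (zstep_le hy) |].
  case: (hs y hx) => [->|[-> e]]; [by left| by right; right; split => //; rewrite e].
Qed.

Lemma zstep_surj y : y <= size J -> exists2 x, x <= size K & f x = y.
Proof.
move=> hy; case: (hz) => h0 hK hs.
have ex : exists x, (y <= f x) && (x <= size K) by exists (size K); rewrite hK hy leqnn.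
case: (ex_minnP ex) => x /andP[h1 h2] hmin.
case: x h1 h2 hmin => [|x] h1 h2 hmin.
  by exists 0 => //; rewrite h0 in h1 *; lia.
exists x.+1 => //.
have : ~~ ((y <= f x) && (x <= size K)).
  by apply/negP=> /hmin; lia.
rewrite (ltnW h2) andbT -ltnNge => hlt.
case: (hs x h2) => [e|[e _]]; lia.
Qed.

Lemma zstep_shr : shrinking K J f.
Proof.
split; [exact: zstep_le | exact: zstep_iarr | exact: zstep_surj |].
move=> x y hxy hy; exact: zstep_mono2.
Qed.
End Z.

Lemma shr_zstep K J f : shrinking K J f -> zstep K J f.
Proof.
case=> hb hm hs hmo.
have f0 : f 0 = 0.
  case: (hs 0 (leq0n _)) => x hx e; have := hmo 0 x (leq0n _) hx; lia.
split => //.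
  case: (hs (size J) (leqnn _)) => x hx e.
  have := hmo x (size K) hx (leqnn _); have := hb _ (leqnn (size K)); lia.
move=> x hx.
have mo := hmo x x.+1 (leqnSn _) hx.
case hn: (nth false K x).
  have : iarr K x x.+1 by split=> //; [exact: ltnW | right; left].
  move/hm => [_ _ [->|[[-> e]|[e _]]]]; [by left| by right|lia].
have : iarr K x.+1 x by split=> //; [exact: ltnW | right; right; rewrite hn].
move/hm => [_ _ [->|[[e' e]|[-> e]]]]; [by left| lia |].
by right; split=> //; apply/negbTE.
Qed.

Lemma zstep_comp K J I f g : zstep K J f -> zstep J I g -> zstep K I (fun x => g (f x)).
Proof.
move=> hf hg; case: (hf) => f0 fK fs; case: (hg) => g0 gK gs.
split; [by rewrite f0 | by rewrite fK |].
move=> x hx; case: (fs x hx) => [->|[e n]]; first by left.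
have hlt : f x < size J by have := zstep_le hf hx; lia.
rewrite e; case: (gs _ hlt) => [->|[-> n2]]; [by left | by right; rewrite n2 n].
Qed.

Lemma zstep_id J : zstep J J id.
Proof. by split=> // x _; right. Qed.

Lemma nth_Iseq N eps x : x < N -> nth false (Iseq N eps) x = (if eps then ~~ odd x else odd x).
Proof. by move=> h; rewrite /Iseq (nth_map 0) ?size_iota // nth_iota. Qed.

Lemma size_Iseq N eps : size (Iseq N eps) = N.
Proof. by rewrite /Iseq size_map size_iota. Qed.

Lemma size_Jinf m : size (Jinf m) = m.+1.
Proof. exact: size_Iseq. Qed.

Lemma exists_shr J : exists N0, forall N eps, N0 <= N -> exists f, zstep (Iseq N eps) J f.
Proof.
elim: J => [|d J0 [N0 IH]].
  exists 0 => N eps _; exists (fun _ => 0); split=> //; by move=> x _; left.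
exists N0.+2 => N eps hN.
case: (eqVneq eps d) => [<-|hne].
- case: N hN => [|N'] // hN.
  case: (IH N' (~~ eps) (ltac:(lia))) => f0 [f00 f0N f0s].
  exists (fun x => if x is x'.+1 then (f0 x').+1 else 0); split => //.
    by rewrite size_Iseq -(size_Iseq N' (~~eps)) f0N.
  rewrite size_Iseq => -[|x] hx; first by right; rewrite f00 nth_Iseq //=; split => //; by case: (eps).
  have hx' : x < size (Iseq N' (~~ eps)) by rewrite size_Iseq.
  case: (f0s x hx') => [->|[-> e]]; [by left|right; split=>//].
  rewrite [nth _ (_ :: _) _]/= e !nth_Iseq //.
  by rewrite oddS; case: (eps); case: (odd x).
- case: N hN => [|[|N']] // hN.
  case: (IH N' eps (ltac:(lia))) => f0 [f00 f0N f0s].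
  exists (fun x => if x is x''.+2 then (f0 x'').+1 else 0); split => //.
    by rewrite size_Iseq -(size_Iseq N' eps) f0N.
  rewrite size_Iseq => -[|[|x]] hx; first by left.
    right; split; first by rewrite f00.
    by rewrite nth_Iseq //=; move: hne; case: (eps); case: (d).
  have hx' : x < size (Iseq N' eps) by rewrite size_Iseq.
  case: (f0s x hx') => [->|[-> e]]; [by left|right; split=>//].
  rewrite [nth _ (_ :: _) _]/= e !nth_Iseq //.
  by rewrite /= !negbK.
Qed.

Lemma exists_shr_Jinf J : exists M0, forall M, M0 <= M -> exists f, zstep (Jinf M) J f.
Proof.
case: (exists_shr J) => N0 h; exists N0 => M hM; apply: h; exact: leqW.
Qed.

Lemma odd_mod4 m : odd m = (m %% 4 == 1) || (m %% 4 == 3).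
Proof.
have := modn2 m; case: (odd m) => h; simpl in h.
  symmetry; apply/orP; case: (ltnP (m %% 4) 2) => hh; [left|right]; apply/eqP; lia.
apply/esym/negbTE/negP => /orP[] /eqP; lia.
Qed.

Lemma eps_step m : (m.+1 %% 4 < 2) = (if odd m then ~~ (m %% 4 < 2) else (m %% 4 < 2)).
Proof.
have := odd_mod4 m; case: (odd m) => /esym.
  by case/orP => /eqP h; [have -> : m.+1 %% 4 = 2 by lia | have -> : m.+1 %% 4 = 0 by lia]; rewrite h.
move=> h; have h4 : m %% 4 < 4 by rewrite ltn_mod.
have [e|e] : m %% 4 = 0 \/ m %% 4 = 2.
  by move/negbT: h; rewrite negb_or => /andP[/eqP ? /eqP ?]; lia.
  by rewrite e; have -> : m.+1 %% 4 = 1 by lia.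
by rewrite e; have -> : m.+1 %% 4 = 3 by lia.
Qed.

Lemma rho_zstep m : zstep (Jinf m.+1) (Jinf m) (rho m).
Proof.
rewrite /rho oddS; split.
- by case: (odd m).
- rewrite !size_Jinf; case: (odd m) => //=; lia.
- move=> x; rewrite size_Jinf => hx.
  have ee := eps_step m.
  case ho: (odd m) => /=; rewrite ho in ee.
  + case: x hx => [|x] hx; first by left.
    right; split => //.
    rewrite /Jinf !nth_Iseq; try lia.
    rewrite ee oddS; by case: (m %% 4 < 2); case: (odd x).
  + case: (ltnP x m.+1) => hxm.
      right; split; first by lia.
      by rewrite /Jinf !nth_Iseq ?ee //; lia.
    left; lia.
Qed.

Lemma pm_comp n (Js Ks : 'I_n -> interval) (G : digraph) (g : G) phi F :
  pairmap Js g phi -> (forall i, zstep (Ks i) (Js i) (F i)) ->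
  pairmap Ks g (fun x => phi (fun i => F i (x i))).
Proof.
move=> [hA hB] hF; split.
- move=> x y [hx hy H]; apply: hA; split.
  + by move=> i /=; exact: (zstep_le (hF i) (hx i)).
  + by move=> i /=; exact: (zstep_le (hF i) (hy i)).
  + case: H => [e|[i [hi he]]]; [left => j; by rewrite e | right; exists i; split].
      exact: (zstep_iarr (hF i) hi).
    by move=> j /he ->.
- move=> x hx [i hi]; apply: hB.
  + by move=> j /=; exact: (zstep_le (hF j) (hx j)).
  + exists i; case: (hF i) => h0 hK _; case: hi => ->; [left|right] => //.
Qed.

Definition res n (y : 'I_n.+1 -> nat) : 'I_n -> nat := fun i => y (lift ord_max i).

Lemma inbox_res n m (y : 'I_n.+1 -> nat) :
  inbox (fun _ => Jinf m) y -> inbox (fun _ => Jinf m) (res y).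
Proof. by move=> h i; apply: h. Qed.

Lemma nth_Jinf m x : x <= m -> nth false (Jinf m) x = (if m %% 4 < 2 then ~~ odd x else odd x).
Proof. by move=> h; rewrite /Jinf nth_Iseq. Qed.

Lemma htpy_fwd n (G : digraph) (g : G) M (u v : ('I_n -> nat) -> G) :
  0 < M -> sphere g M u -> sphere g M v ->
  (forall x, inbox (fun _ => Jinf M) x -> arr (u x) (v x)) -> nhtpy g M u v.
Proof.
move=> M0 [hu1 hu2] [hv1 hv2] huv.
pose t0 := if M %% 4 < 2 then 0 else 1.
have t0le : t0 <= 1 by rewrite /t0; case: ifP.
have nt0 : nth false (Jinf M) t0.
  rewrite nth_Jinf /t0; last by case: ifP => //; lia.
  by case: (M %% 4 < 2).
exists (fun y => if y ord_max <= t0 then u (res y) else v (res y)); split.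
- move=> y y' [hy hy' H].
  have ry := inbox_res hy; have ry' := inbox_res hy'.
  case: H => [e|[i [hi he]]].
    have -> : y' = y by apply: functional_extensionality => j; rewrite e.
    exact: arr_refl.
  case: (unliftP ord_max i) => [i0 ei|ei]; subst i.
  + have eo : y ord_max = y' ord_max by apply: he; exact: neq_lift.
    have hr : boxarr (fun _ => Jinf M) (res y) (res y').
      split => //; right; exists i0; split => // j hj; apply: he.
      by apply: contra hj => /eqP/lift_inj ->.
    rewrite eo; case: ifP => _; [exact: hu1 | exact: hv1].
  + have er : res y = res y'.
      by apply: functional_extensionality => j; apply: he; rewrite eq_sym neq_lift.
    rewrite -er; case: hi => _ _ hi.
    case: (leqP (y ord_max) t0) => h1; case: (leqP (y' ord_max) t0) => h2;
      try exact: arr_refl.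
    * case: hi => [e|[[e _]|[e _]]]; try lia.
      exact: huv.
    * case: hi => [e|[[e _]|[e hn]]]; try lia.
      have e' : y' ord_max = t0 by lia.
      by rewrite e' nt0 in hn.
- by move=> y hy ->; rewrite leq0n.
- move=> y hy ->; rewrite size_Jinf.
  have -> : (M.+1 <= t0) = false by apply/negbTE; rewrite -ltnNge; lia.
  by [].
- move=> y hy [j hj hje].
  case: (unliftP ord_max j) => [j0 ej|ej]; subst j; last by rewrite eqxx in hj.
  have hb : onbd (fun _ => Jinf M) (res y) by exists j0.
  by case: ifP => _; [apply: hu2 | apply: hv2] => //; exact: inbox_res.
Qed.

Section PS.
Variables (n : nat) (G : digraph) (g : G).

Lemma Peq_box m (c c' : ('I_n -> nat) -> G) :
  sphere g m c -> sphere g m c' -> (forall x, inbox (fun _ => Jinf m) x -> c x = c' x) ->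
  Peq g (existT _ m c) (existT _ m c').
Proof.
move=> hc hc' e; apply: rst_step; split => //; left; constructor => //; exact: hc.1.
Qed.

Lemma Peq_fwd M (u v : ('I_n -> nat) -> G) : 0 < M -> sphere g M u -> sphere g M v ->
  (forall x, inbox (fun _ => Jinf M) x -> arr (u x) (v x)) ->
  Peq g (existT _ M u) (existT _ M v).
Proof. move=> M0 hu hv h; apply: rst_step; split => //; right; split => //; exact: htpy_fwd. Qed.

Lemma Peq_bwd M (u v : ('I_n -> nat) -> G) : 0 < M -> sphere g M u -> sphere g M v ->
  (forall x, inbox (fun _ => Jinf M) x -> arr (v x) (u x)) ->
  Peq g (existT _ M u) (existT _ M v).
Proof. move=> M0 hu hv h; apply: rst_sym; exact: Peq_fwd. Qed.

Lemma sphere_rho m (c : ('I_n -> nat) -> G) : sphere g m c ->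
  sphere g m.+1 (fun x => c (fun i => rho m (x i))).
Proof. move=> hc; exact: (pm_comp hc (fun _ => rho_zstep m)). Qed.

Lemma Peq_step m (c : ('I_n -> nat) -> G) : sphere g m c ->
  Peq g (existT _ m c) (existT _ m.+1 (fun x => c (fun i => rho m (x i)))).
Proof.
move=> hc; apply: rst_step; split => //=; first exact: sphere_rho.
left; constructor; exact: hc.1.
Qed.

Definition R (a : Arep n G) (c : Nrep n G) :=
  sphere g (tag c) (tagged c) /\ exists F : 'I_n -> nat -> nat,
   (forall i, zstep (Jinf (tag c)) (tag a i) (F i)) /\
   forall y, inbox (fun _ => Jinf (tag c)) y -> tagged c y = tagged a (fun i => F i (y i)).

Lemma R_exists (a : Arep n G) M0 : exists M F, M0 <= M /\ forall i, zstep (Jinf M) (tag a i) (F i).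
Proof.
have h : forall i, exists N0, forall M, N0 <= M -> exists f, zstep (Jinf M) (tag a i) f.
  by move=> i; exact: exists_shr_Jinf.
case: (functional_choice _ h) => N0 hN0.
pose M := maxn M0 (\max_i N0 i).
have h2 : forall i, exists f, zstep (Jinf M) (tag a i) f.
  move=> i; apply: hN0; exact: leq_trans (@leq_bigmax _ N0 i) (leq_maxr _ _).
case: (functional_choice _ h2) => F hF.
by exists M, F; split => //; exact: leq_maxl.
Qed.

Lemma R_make (a : Arep n G) M F : pairmap (tag a) g (tagged a) ->
  (forall i, zstep (Jinf M) (tag a i) (F i)) ->
  R a (existT _ M (fun y => tagged a (fun i => F i (y i)))).
Proof. move=> ha hF; split; [exact: (pm_comp ha hF) | by exists F]. Qed.

Lemma R_raise (a : Arep n G) m c : R a (existT _ m c) ->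
  R a (existT _ m.+1 (fun x => c (fun i => rho m (x i)))) /\
  Peq g (existT _ m c) (existT _ m.+1 (fun x => c (fun i => rho m (x i)))).
Proof.
case=> /= hs [F [hF hc]]; split; last exact: Peq_step.
split; first exact: sphere_rho.
exists (fun i x => F i (rho m x)); split.
  by move=> i; exact: (zstep_comp (rho_zstep m) (hF i)).
move=> y hy /=; apply: hc => i; exact: (zstep_le (rho_zstep m) (hy i)).
Qed.

Lemma R_raise_to (a : Arep n G) m c M : m <= M -> R a (existT _ m c) ->
  exists c', R a (existT _ M c') /\ Peq g (existT _ m c) (existT _ M c').
Proof.
move=> hmM hR; rewrite -(subnKC hmM); elim: (M - m) => [|d [c' [hR' hP]]].
  by rewrite addn0; exists c; split => //; exact: rst_refl.
case: (R_raise hR') => h1 h2; rewrite addnS.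
by eexists; split; [exact: h1 | exact: rst_trans hP h2].
Qed.

End PS.

Lemma zcross K J f x a : zstep K J f -> x <= size K -> f x = a -> a < size J ->
  exists w, [/\ x <= w, w < size K, f w = a & f w.+1 = a.+1].
Proof.
move=> hz hx; case: (hz) => _ fK fs.
move: hx; move Hd: (size K - x) => d; elim: d x Hd => [|d IH] x Hd hx fx ha.
  have ex : x = size K by lia.
  by rewrite ex fK in fx; lia.
have hxK : x < size K by lia.
case: (fs x hxK) => [e|[e _]].
  case: (IH x.+1) => //; [lia | by rewrite e | move=> w [h1 h2 h3 h4]].
  by exists w; split => //; lia.
by exists x; split => //; rewrite e fx.
Qed.

Definition dist (a b : nat) := (a - b) + (b - a).
Definition Dm N (f f' : nat -> nat) := \sum_(x < N) dist (f x) (f' x).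

Lemma Dm_sym N f f' : Dm N f f' = Dm N f' f.
Proof. by apply: eq_bigr => i _; rewrite /dist addnC. Qed.

Lemma move_lemma M J f f' x0 : zstep (Jinf M) J f -> zstep (Jinf M) J f' ->
  x0 <= M.+1 -> f x0 < f' x0 -> (forall x, x < x0 -> f x = f' x) ->
  exists f2, [/\ zstep (Jinf M) J f2, Dm M.+2 f2 f' < Dm M.+2 f f' &
   (forall x, x <= M.+1 -> iarr J (f x) (f2 x)) \/
   (forall x, x <= M.+1 -> iarr J (f2 x) (f x))].
Proof.
move=> hf hf' hx0 hlt hmin.
case: (hf) => f0 fK fs; case: (hf') => f0' fK' fs'.
rewrite size_Jinf in fK fK' fs fs'.
have mono : forall x y, x <= y -> y <= M.+1 -> f x <= f y.
  by move=> x y h h'; apply: (zstep_mono2 hf h); rewrite size_Jinf.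
have mono' : forall x y, x <= y -> y <= M.+1 -> f' x <= f' y.
  by move=> x y h h'; apply: (zstep_mono2 hf' h); rewrite size_Jinf.
case: x0 hx0 hlt hmin => [|x1] hx0 hlt hmin; first by rewrite f0 f0' in hlt.
set a := f x1.
have ea : f' x1 = a by rewrite /a hmin.
have hx1 : x1 < M.+1 by lia.
have [fx0 f'x0 na] : [/\ f x1.+1 = a, f' x1.+1 = a.+1 & nth false J a = nth false (Jinf M) x1].
  case: (fs x1 hx1) => [e|[e _]]; case: (fs' x1 hx1) => [e'|[e' n']]; rewrite -/a ?ea in e e'; try lia.
  by split => //; rewrite -ea.
have aJ : a < size J by have := zstep_le hf' (_ : x1.+1 <= size (Jinf M)); rewrite size_Jinf; lia.
have [w [hw1 hw2 fw fw1]] : exists w, [/\ x1.+1 <= w, w < size (Jinf M), f w = a & f w.+1 = a.+1].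
  apply: (zcross hf); rewrite ?size_Jinf //; lia.
rewrite size_Jinf in hw2.
have nw : nth false J a = nth false (Jinf M) w.
  by case: (fs w hw2) => [e|[_ e]]; [lia | rewrite -fw].
have ow : odd w = odd x1.
  move: nw; rewrite na !nth_Jinf; try lia.
  by case: (M %% 4 < 2) => // /negb_inj.
have hw3 : x1.+2 <= w.
  case: (ltnP x1.+1 w) => // hle; have ew : w = x1.+1 by lia.
  by rewrite ew /= in ow; case: (odd x1) ow.
set p := w.-2.
have ewp : w = p.+2 by rewrite /p; lia.
have fa : forall x, x1 <= x -> x <= w -> f x = a.
  move=> x h1 h2; have := mono _ _ h1 (_ : x <= M.+1); have := mono _ _ h2 (_ : w <= M.+1); rewrite /a; lia.
have np : nth false J a = nth false (Jinf M) p.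
  rewrite nw ewp !nth_Jinf; try lia. by rewrite /= !negbK.
pose f2 x := if (x == p.+1) || (x == p.+2) then a.+1 else f x.
have f2E : forall x, x != p.+1 -> x != p.+2 -> f2 x = f x.
  by move=> x h1 h2; rewrite /f2 (negbTE h1) (negbTE h2).
have f2p1 : f2 p.+1 = a.+1 by rewrite /f2 eqxx.
have f2p2 : f2 p.+2 = a.+1 by rewrite /f2 eqxx orbT.
exists f2; split.
- split.
  + by rewrite f2E.
  + by rewrite size_Jinf f2E; try (apply/eqP; lia).
  + move=> x; rewrite size_Jinf => hx.
    case: (eqVneq x p) => [->|hxp].
      right; rewrite f2p1 f2E; try (apply/eqP; lia).
      by rewrite fa; try lia.
    case: (eqVneq x p.+1) => [->|hxp1]; first by left; rewrite f2p1 f2p2.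
    case: (eqVneq x p.+2) => [->|hxp2].
      by left; rewrite f2p2 f2E -?ewp ?fw1 //; apply/eqP; lia.
    rewrite !f2E //; try (apply/eqP; lia); exact: fs.
- have hw : w < M.+2 by lia.
  rewrite /Dm (bigD1 (Ordinal hw)) //= [X in _ < X](bigD1 (Ordinal hw)) //=.
  have hs : \sum_(i < M.+2 | i != Ordinal hw) dist (f2 i) (f' i) <=
            \sum_(i < M.+2 | i != Ordinal hw) dist (f i) (f' i).
    apply: leq_sum => i _; have hi := ltn_ord i.
    case: (eqVneq (val i) p.+1) => [e|h1]; last case: (eqVneq (val i) p.+2) => [e|h2].
    + rewrite e f2p1 fa; try lia.
      have := mono' x1.+1 p.+1; rewrite /dist; lia.
    + rewrite e f2p2 fa; try lia.
      have := mono' x1.+1 p.+2; rewrite /dist; lia.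
    + by rewrite f2E.
  have : dist (f2 w) (f' w) < dist (f w) (f' w).
    rewrite ewp f2p2 -ewp fw.
    have := mono' x1.+1 w; rewrite /dist; lia.
  by move=> h; rewrite -addSn leq_add.
- have hle : forall x, x <= M.+1 -> f x <= size J by move=> x hx; rewrite -fK; exact: mono.
  have key : forall x, x <= M.+1 -> f2 x = f x \/ (f x = a /\ f2 x = a.+1).
    move=> x hx; case: (eqVneq x p.+1) => [->|h1]; last case: (eqVneq x p.+2) => [->|h2].
    + by right; rewrite f2p1 fa //; lia.
    + by right; rewrite f2p2 fa //; lia.
    + by left; rewrite f2E.
  case na2 : (nth false J a); [left|right] => x hx;
    (case: (key x hx) => [->|[e1 e2]]; [exact: iarr_refl (hle x hx) | rewrite e1 e2]);
    split => //; try lia.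
Qed.

Section PS2.
Variables (n : nat) (G : digraph) (g : G).

Notation cub M phi F := (existT (fun _ => ('I_n -> nat) -> G) M (fun y => phi (fun i => F i (y i)))).

Lemma adj_Peq M (Js : 'I_n -> interval) (phi : ('I_n -> nat) -> G) F F2 i0 :
  0 < M -> pairmap Js g phi ->
  (forall i, zstep (Jinf M) (Js i) (F i)) -> (forall i, zstep (Jinf M) (Js i) (F2 i)) ->
  (forall j, j != i0 -> F2 j = F j) ->
  (forall x, x <= M.+1 -> iarr (Js i0) (F i0 x) (F2 i0 x)) \/
  (forall x, x <= M.+1 -> iarr (Js i0) (F2 i0 x) (F i0 x)) ->
  Peq g (cub M phi F) (cub M phi F2).
Proof.
move=> M0 hphi hF hF2 hj H.
have s1 := pm_comp hphi hF; have s2 := pm_comp hphi hF2.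
have hyb : forall y, inbox (fun _ => Jinf M) y -> y i0 <= M.+1.
  by move=> y hy; have := hy i0; rewrite size_Jinf.
case: H => H; [apply: Peq_fwd | apply: Peq_bwd] => // y hy; apply: hphi.1; split.
- by move=> i /=; exact: (zstep_le (hF i) (hy i)).
- by move=> i /=; exact: (zstep_le (hF2 i) (hy i)).
- right; exists i0; split; first exact: H (hyb y hy).
  by move=> j /hj ->.
- by move=> i /=; exact: (zstep_le (hF2 i) (hy i)).
- by move=> i /=; exact: (zstep_le (hF i) (hy i)).
- right; exists i0; split; first exact: H (hyb y hy).
  by move=> j /hj ->.
Qed.

Lemma cc_aux M (Js : 'I_n -> interval) (phi : ('I_n -> nat) -> G) i0 : 0 < M -> pairmap Js g phi ->
  forall d F F', Dm M.+2 (F i0) (F' i0) < d ->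
  (forall i, zstep (Jinf M) (Js i) (F i)) -> (forall i, zstep (Jinf M) (Js i) (F' i)) ->
  (forall j, j != i0 -> F j = F' j) ->
  Peq g (cub M phi F) (cub M phi F').
Proof.
move=> M0 hphi; elim=> [//|d IH] F F' hD hF hF' hj.
have s1 := pm_comp hphi hF; have s2 := pm_comp hphi hF'.
case: (boolP [exists x : 'I_M.+2, F i0 x != F' i0 x]) => hex; last first.
  apply: Peq_box => // y hy /=; congr phi; apply: functional_extensionality => i.
  case: (eqVneq i i0) => [->|hi]; last by rewrite hj.
  have hyi : y i0 < M.+2 by have := hy i0; rewrite size_Jinf.
  move/existsPn: hex => /(_ (Ordinal hyi)) /negPn /eqP; exact.
have ex : exists x, (x <= M.+1) && (F i0 x != F' i0 x).
  by case/existsP: hex => x hx; exists x; rewrite hx -ltnS ltn_ord.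
case: (ex_minnP ex) => x0 /andP[hx0 hne] hmin.
have hmin' : forall x, x < x0 -> F i0 x = F' i0 x.
  move=> x hx; apply/eqP; apply/negPn/negP => hn.
  have := hmin x; rewrite hn andbT; move/(_ (ltac:(lia))); lia.
case: (ltngtP (F i0 x0) (F' i0 x0)) => hc; last by rewrite hc eqxx in hne.
- case: (move_lemma (hF i0) (hF' i0) hx0 hc hmin') => f2 [hz2 hD2 hadj].
  pose F2 := fun j => if j == i0 then f2 else F j.
  have hF2 : forall i, zstep (Jinf M) (Js i) (F2 i).
    by move=> i; rewrite /F2; case: eqP => [->|_].
  apply: rst_trans (_ : Peq g _ (cub M phi F2)) _.
    apply: (adj_Peq (i0 := i0)) hF hF2 _ _ => //; first by move=> j hj'; rewrite /F2 (negbTE hj').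
    by rewrite /F2 eqxx.
  apply: IH => //; first by rewrite /F2 eqxx; lia.
  by move=> j hj'; rewrite /F2 (negbTE hj') hj.
- have hmin'' : forall x, x < x0 -> F' i0 x = F i0 x by move=> x /hmin' ->.
  case: (move_lemma (hF' i0) (hF i0) hx0 hc hmin'') => f2 [hz2 hD2 hadj].
  pose F2 := fun j => if j == i0 then f2 else F' j.
  have hF2 : forall i, zstep (Jinf M) (Js i) (F2 i).
    by move=> i; rewrite /F2; case: eqP => [->|_].
  apply: rst_trans (_ : Peq g _ (cub M phi F2)) _.
    apply: IH => //; first by rewrite /F2 eqxx Dm_sym; rewrite Dm_sym in hD; lia.
    by move=> j hj'; rewrite /F2 (negbTE hj') hj.
  apply: rst_sym; apply: (adj_Peq (i0 := i0)) hF' hF2 _ _ => //; first by move=> j hj'; rewrite /F2 (negbTE hj').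
  by rewrite /F2 eqxx.
Qed.

Lemma Fchange M (Js : 'I_n -> interval) (phi : ('I_n -> nat) -> G) F F' : 0 < M -> pairmap Js g phi ->
  (forall i, zstep (Jinf M) (Js i) (F i)) -> (forall i, zstep (Jinf M) (Js i) (F' i)) ->
  Peq g (cub M phi F) (cub M phi F').
Proof.
move=> M0 hphi hF hF'.
pose Gk (k : nat) := fun j : 'I_n => if j < k then F' j else F j.
have hG : forall k i, zstep (Jinf M) (Js i) (Gk k i) by move=> k i; rewrite /Gk; case: ifP.
have : forall k, k <= n -> Peq g (cub M phi F) (cub M phi (Gk k)).
  elim=> [_|k IH hk].
    have -> : Gk 0 = F by apply: functional_extensionality => j.
    exact: rst_refl.
  apply: rst_trans (IH (ltnW hk)) _.
  apply: (@cc_aux M Js phi (Ordinal hk) M0 hphi _ (Gk k) (Gk k.+1) (ltnSn _)) => //.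
  move=> j hj; rewrite /Gk; have : val j != k by apply: contra hj => /eqP e; apply/eqP/val_inj.
  by move=> h; have -> : (j < k.+1) = (j < k) by rewrite ltnS leq_eqVlt (negbTE h).
move/(_ n (leqnn n)).
have -> : Gk n = F' by apply: functional_extensionality => j; rewrite /Gk ltn_ord.
by [].
Qed.

Lemma R_unique (a : Arep n G) c1 c2 : pairmap (tag a) g (tagged a) ->
  R g a c1 -> R g a c2 -> Peq g c1 c2.
Proof.
case: a => Js phi /= hphi; case: c1 => m1 c1; case: c2 => m2 c2 h1 h2.
have [c1' [h1' p1]] := R_raise_to (leq_trans (leq_maxl m1 m2) (leqnSn _)) h1.
have [c2' [h2' p2]] := R_raise_to (leq_trans (leq_maxr m1 m2) (leqnSn _)) h2.
apply: rst_trans p1 _; apply: rst_trans _ (rst_sym p2).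
case: h1' => /= s1 [F1 [hF1 e1]]; case: h2' => /= s2 [F2 [hF2 e2]].
apply: rst_trans (_ : Peq g _ (cub _ phi F1)) _.
  by apply: Peq_box => //; exact: (pm_comp hphi hF1).
apply: rst_trans (_ : Peq g (cub _ phi F2) _).
  exact: (Fchange (ltn0Sn _) hphi hF1 hF2).
apply: rst_sym; apply: Peq_box => //; exact: (pm_comp hphi hF2).
Qed.

End PS2.

Section PS3.
Variables (n : nat) (G : digraph) (g : G).

Definition toA (c : Nrep n G) : Arep n G := existT _ (fun _ => Jinf (tag c)) (tagged c).

Definition pmA (a : Arep n G) := pairmap (tag a) g (tagged a).

Lemma Agen_pm (a b : Arep n G) : Agen g a b -> pmA a /\ pmA b.
Proof.
case=> [Js phi psi h1 h2 _|Js Js' f phi hf hphi]; first by split.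
split => //; apply: (pm_comp hphi) => i; exact: shr_zstep.
Qed.

Lemma Aeq_pm (a b : Arep n G) : Aeq g a b -> (pmA a <-> pmA b).
Proof.
elim=> [x y /Agen_pm [h1 h2]|x|x y _ IH|x y z _ IH1 _ IH2] //.
- exact: iff_sym IH.
- exact: iff_trans IH1 IH2.
Qed.

Lemma R_ex (a : Arep n G) : pmA a -> exists c, R g a c.
Proof.
move=> ha; case: (R_exists a 0) => M [F [_ hF]].
by eexists; exact: (R_make ha hF).
Qed.

Lemma R3 (a b : Arep n G) (c c' : Nrep n G) : Agen g a b -> R g a c -> R g b c' -> Peq g c c'.
Proof.
case=> [Js phi psi h1 h2 hst|Js Js' f phi hf hphi] hc hc'.
- case: (R_exists (existT _ Js phi) 1) => M [F [M1 hF]].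
  have r1 := R_make (a := existT _ Js phi) h1 hF; have r2 := R_make (a := existT _ Js psi) h2 hF.
  apply: rst_trans (R_unique (a := existT _ Js phi) h1 hc r1) _.
  apply: rst_trans _ (R_unique (a := existT _ Js psi) h2 r2 hc').
  have hin : forall y, inbox (fun _ => Jinf M) y -> inbox Js (fun i => F i (y i)).
    by move=> y hy i /=; exact: (zstep_le (hF i) (hy i)).
  case: hst => hst; [apply: Peq_fwd | apply: Peq_bwd] => //;
    try exact: (pm_comp h1 hF); try exact: (pm_comp h2 hF);
    by move=> y hy; apply: hst; apply: hin.
- case: c' hc' => m' c0 [/= s [F' [hF' e]]].
  apply: (R_unique (a := existT _ Js phi) hphi hc); split => //; exists (fun i x => f i (F' i x)); split => //.
  by move=> i; exact: (zstep_comp (hF' i) (shr_zstep (hf i))).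
Qed.

Lemma R4 (a b : Arep n G) : Aeq g a b -> pmA a -> forall c c', R g a c -> R g b c' -> Peq g c c'.
Proof.
elim=> {a b} [a b hab|a|a b hab IH|a b d hab IH1 hbd IH2] ha c c' hc hc'.
- exact: R3 hab hc hc'.
- exact: R_unique ha hc hc'.
- have ha' : pmA a by apply/(Aeq_pm hab).
  exact: rst_sym (IH ha' _ _ hc' hc).
- have hb : pmA b by apply/(Aeq_pm hab).
  case: (R_ex hb) => c'' hc''.
  exact: rst_trans (IH1 ha _ _ hc hc'') (IH2 hb _ _ hc'' hc').
Qed.

Definition ext (x : 'I_n -> nat) (t : nat) : 'I_n.+1 -> nat :=
  fun j => if unlift ord_max j is Some i then x i else t.

Lemma ext_max x t : ext x t ord_max = t.
Proof. by rewrite /ext unlift_none. Qed.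

Lemma ext_lift x t i : ext x t (lift ord_max i) = x i.
Proof. by rewrite /ext liftK. Qed.

Lemma res_ext x t : res (ext x t) = x.
Proof. by apply: functional_extensionality => i; rewrite /res ext_lift. Qed.

Lemma inbox_ext m x t : inbox (fun _ => Jinf m) x -> t <= m.+1 ->
  inbox (fun _ => Jinf m) (ext x t).
Proof.
rewrite -(size_Jinf m) => hx ht j; case: (unliftP ord_max j) => [i ->|->]; by rewrite ?ext_lift ?ext_max.
Qed.

Lemma nhtpy_Aeq m (c c' : ('I_n -> nat) -> G) : sphere g m c -> sphere g m c' -> nhtpy g m c c' ->
  Aeq g (existT _ (fun _ => Jinf m) c) (existT _ (fun _ => Jinf m) c').
Proof.
move=> s1 s2 [h [hh h0 h1 hb]].
pose s t := fun x => h (ext x t).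
have pms : forall t, t <= m.+1 -> pairmap (fun _ => Jinf m) g (s t).
  move=> t ht; split.
  - move=> x y [hx hy H]; apply: hh; split; try exact: inbox_ext.
    case: H => [e|[i [hi he]]].
      by left => j; case: (unliftP ord_max j) => [i ->|->]; rewrite ?ext_lift ?ext_max ?e.
    right; exists (lift ord_max i); rewrite !ext_lift; split => // j hj.
    case: (unliftP ord_max j) => [j0 ej|ej]; subst j; rewrite ?ext_lift ?ext_max //.
    by apply: he; apply: contra hj => /eqP ->.
  - move=> x hx [i hi]; apply: hb; first by apply: inbox_ext; rewrite ?size_Jinf.
    by exists (lift ord_max i); [rewrite eq_sym neq_lift | rewrite ext_lift].
have hst : forall t, t < m.+1 -> hstep (fun _ => Jinf m) (s t) (s t.+1).
  move=> t ht.
  have bx : forall (a b : nat), iarr (Jinf m) a b ->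
      forall z, inbox (fun _ => Jinf m) z -> boxarr (fun _ => Jinf m) (ext z a) (ext z b).
    move=> a b hab z hz; case: (hab) => ha1 hb1 _; rewrite size_Jinf in ha1 hb1.
    split; try exact: inbox_ext.
    right; exists ord_max; rewrite !ext_max; split => // j hj.
    case: (unliftP ord_max j) => [j0 ej|ej]; subst j; rewrite ?ext_lift //.
    by rewrite eqxx in hj.
  case hn: (nth false (Jinf m) t); [left|right] => x hx; apply: hh; apply: bx => //.
  + split; rewrite ?size_Jinf //; first lia. by right; left.
  + split; rewrite ?size_Jinf //; first lia. by right; right; rewrite hn.
have e0 : forall x, inbox (fun _ => Jinf m) x -> s 0 x = c x.
  move=> x hx; rewrite /s h0; [by have := res_ext x 0; rewrite /res => -> | exact: inbox_ext | exact: ext_max].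
have e1 : forall x, inbox (fun _ => Jinf m) x -> s m.+1 x = c' x.
  move=> x hx; rewrite /s h1; [by have := res_ext x m.+1; rewrite /res => -> | exact: inbox_ext | by rewrite ext_max size_Jinf].
have chain : forall t, t <= m.+1 ->
    Aeq g (existT _ (fun _ => Jinf m) c) (existT _ (fun _ => Jinf m) (s t)).
  elim=> [_|t IH ht].
    apply: rst_step; apply: Agen_htpy => //; first exact: pms.
    by left => x hx; rewrite e0 //; exact: arr_refl.
  apply: rst_trans (IH (ltnW ht)) _; apply: rst_step; apply: Agen_htpy.
  + exact: pms (ltnW ht).
  + exact: pms.
  + exact: hst.
apply: rst_trans (chain _ (leqnn _)) _; apply: rst_step; apply: Agen_htpy => //.
  exact: pms.
by left => x hx; rewrite e1 //; exact: arr_refl.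
Qed.

Lemma Psi_wd (c c' : Nrep n G) : Peq g c c' -> Aeq g (toA c) (toA c').
Proof.
elim=> [a b [s1 s2 H]|a|a b _ IH|a b d _ IH1 _ IH2].
- case: H => [H|[et hh]].
  + move: s1 s2; case: H => [m c0 c1 hc he|m c0 hc] s1 s2; apply: rst_step => /=.
      apply: Agen_htpy => //; left => x hx; rewrite /= -he //; exact: arr_refl.
    apply: (Agen_shr (f := fun _ => rho m)) => //.
    by move=> i; apply: zstep_shr; exact: rho_zstep.
  + case: a b s1 s2 et hh => [m c0] [m' c1] /= s1 s2 et hh; subst m'.
    exact: nhtpy_Aeq.
- exact: rst_refl.
- exact: rst_sym IH.
- exact: rst_trans IH1 IH2.
Qed.

Lemma R_Aeq (a : Arep n G) (c : Nrep n G) : pmA a -> R g a c -> Aeq g a (toA c).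
Proof.
case: a => Js phi; case: c => m c0 ha [/= s [F [hF e]]].
apply: rst_trans (_ : Aeq g _ (existT _ (fun _ => Jinf m) (fun x => phi (fun i => F i (x i))))) _.
  by apply: rst_step; apply: Agen_shr => // i; exact: zstep_shr.
apply: rst_step; apply: Agen_htpy => //; first exact: (pm_comp ha hF).
by left => x hx; rewrite /= e //; exact: arr_refl.
Qed.

Lemma R_self (c : Nrep n G) : sphere g (tag c) (tagged c) -> R g (toA c) c.
Proof. by case: c => m c0 /= s; split => //; exists (fun _ => id); split => // i; exact: zstep_id. Qed.

End PS3.

Lemma sig_eq {T : Type} {P : T -> Prop} (x y : sig P) : sval x = sval y -> x = y.
Proof.
case: x y => x px [y py] /= e; subst y; f_equal; apply: proof_irrelevance.
Qed.

Lemma crst_class {T : Type} (Rl : T -> T -> Prop) x y :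
  clos_refl_sym_trans T Rl x y -> clos_refl_sym_trans T Rl x = clos_refl_sym_trans T Rl y.
Proof.
move=> h; apply: functional_extensionality => z; apply: propositional_extensionality; split => h'.
  exact: rst_trans (rst_sym h) h'.
exact: rst_trans h h'.
Qed.

Lemma crst_of_class {T : Type} (Rl : T -> T -> Prop) x y :
  clos_refl_sym_trans T Rl x = clos_refl_sym_trans T Rl y -> clos_refl_sym_trans T Rl x y.
Proof. by move=> e; rewrite e; exact: rst_refl. Qed.

Section Fin.
Variable n : nat.

Definition PhiPred (G : digraph) (g : G) (S : Arep n G -> Prop) : Nrep n G -> Prop :=
  fun c => exists a c1, [/\ S a, R g a c1 & Peq g c1 c].

Lemma PhiPred_spec (G : digraph) (g : G) a0 c0 : pmA g a0 -> R g a0 c0 ->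
  PhiPred g (Aeq g a0) = Peq g c0.
Proof.
move=> ha hr; apply: functional_extensionality => c; apply: propositional_extensionality.
split.
  case=> a [c1 [h1 h2 h3]]; exact: rst_trans (R4 h1 ha hr h2) h3.
by move=> h; exists a0, c0; split => //; exact: rst_refl.
Qed.

Definition PsiPred (G : digraph) (g : G) (S : Nrep n G -> Prop) : Arep n G -> Prop :=
  fun a => exists c, S c /\ Aeq g (toA c) a.

Lemma PsiPred_spec (G : digraph) (g : G) c0 : PsiPred g (Peq g c0) = Aeq g (toA c0).
Proof.
apply: functional_extensionality => a; apply: propositional_extensionality; split.
  case=> c [h1 h2]; exact: rst_trans (Psi_wd h1) h2.
by move=> h; exists c0; split => //; exact: rst_refl.
Qed.

Definition Phi (G : digraph) (g : G) (P : A n G g) : Pi n G g.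
Proof.
refine (exist _ (PhiPred g (sval P)) _).
case: (proj2_sig P) => a0 ha0 ->.
case: (R_ex ha0) => c0 hc0.
exists c0; first exact: hc0.1.
exact: PhiPred_spec.
Defined.

Definition Psi (G : digraph) (g : G) (Q : Pi n G g) : A n G g.
Proof.
refine (exist _ (PsiPred g (sval Q)) _).
case: (proj2_sig Q) => c0 hc0 ->.
exists (toA c0) => //; exact: PsiPred_spec.
Defined.

Lemma Phi_bij (G : digraph) (g : G) : bijective (@Phi G g).
Proof.
exists (@Psi G g).
- case=> S [a0 ha0 eS]; apply: sig_eq => /=.
  case: (R_ex ha0) => c0 hc0.
  rewrite eS (PhiPred_spec ha0 hc0) PsiPred_spec.
  by apply/esym/crst_class; exact: R_Aeq.
- case=> S [c0 hc0 eS]; apply: sig_eq => /=.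
  rewrite eS PsiPred_spec; apply: PhiPred_spec => //; exact: R_self.
Qed.

Lemma pm_map (G G' : digraph) (h : G -> G') (g : G) (Js : 'I_n -> interval) phi :
  dmap h -> pairmap Js g phi -> pairmap Js (h g) (h \o phi).
Proof.
move=> hd [h1 h2]; split.
  by move=> x y hxy; apply: hd; exact: h1.
by move=> x hx hb /=; rewrite h2.
Qed.

Lemma R_map (G G' : digraph) (h : G -> G') (g : G) (a : Arep n G) (c : Nrep n G) :
  dmap h -> R g a c -> R (h g) (Amap h a) (Nmap h c).
Proof.
move=> hd [s [F [hF e]]]; split; first exact: pm_map.
by exists F; split => // y hy /=; rewrite e.
Qed.

Lemma Peq_map (G G' : digraph) (h : G -> G') (g : G) (x y : Nrep n G) :
  dmap h -> Peq g x y -> Peq (h g) (Nmap h x) (Nmap h y).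
Proof.
move=> hd; elim=> [a b [s1 s2 H]|a|a b _ IH|a b d _ IH1 _ IH2].
- apply: rst_step; split; try exact: pm_map.
  case: H => [H|[et [H [hH0 hH1 hH2 hH3]]]].
    left; case: H {s1 s2} => [m c0 c1 hc he|m c0 hc]; rewrite /Nmap /=.
      apply: Ngen_box; first by move=> u v huv; apply: hd; exact: hc.
      by move=> z hz /=; rewrite he.
    apply: (Ngen_step (c := h \o c0)); by move=> u v huv; apply: hd; exact: hc.
  right; split => //; exists (h \o H); split.
  + by move=> u v huv; apply: hd; exact: hH0.
  + by move=> u hu e /=; rewrite hH1.
  + by move=> u hu e /=; rewrite hH2.
  + by move=> u hu e /=; rewrite hH3.
- exact: rst_refl.
- exact: rst_sym IH.
- exact: rst_trans IH1 IH2.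
Qed.

End Fin.

Theorem mainTheorem5 (n : nat) :
  exists Phi : forall (G : digraph) (g : G), A n G g -> Pi n G g,
    (forall (G : digraph) (g : G), bijective (Phi G g)) /\ natural_family Phi.
Proof.
exists (@Phi n); split; first exact: Phi_bij.
move=> G G' h g hd P P' a eP eP' Q Q' c eQ eQ' ePQ.
have ha : pmA g a.
  case: P eP ePQ => S [a0 ha0 eS] /= eP _.
  have h0 : Aeq g a0 a by exact: crst_of_class (etrans (esym eS) eP).
  exact: (proj1 (Aeq_pm h0) ha0).
case: (R_ex ha) => c1 hc1.
have e1 : sval (Phi P) = Peq g c1 by rewrite /= eP; exact: PhiPred_spec.
have hcc : Peq g c1 c.
  exact: crst_of_class (etrans (esym e1) (etrans (f_equal (@proj1_sig _ _) ePQ) eQ)).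
apply: sig_eq; rewrite eQ' /= eP'.
rewrite (PhiPred_spec (c0 := Nmap h c1)); first exact: crst_class (Peq_map hd hcc).
  exact: pm_map.
exact: R_map.
Qed.
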